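(* Let $\Gamma$ be a rationally metrised graph and $\mu\in\mathcal M^0(\Gamma)$. For any fixed rational vertex $b$, the function $f(x)=\langle x-b,\mu\rangle$ on rational vertices $x$ is piecewise polynomial with log poles on the half-edges, and $\Delta(f)=\mu$.
   Context: Rationally metrised graph: finite sets of vertices $V$, oriented edges $E$, half-edges $D$, source map $s$, fixed-point-free involution $e\mapsto e^{-1}$ on $E$, $t(e)=s(e^{-1})$, connected, lengths $\ell(e)=\ell(e^{-1})\in\mathbb Q_{>0}$; $E^+$ = unoriented edges. Rational vertices are points at rational distance along edges or half-edges; all constructions are compatible with subdividing edges at rational points, so rational vertices may be treated as vertices (and a vertex $x$ as the delta measure at $x$). A measure (piecewise polynomial with log poles on $D$) is a formal sum $\mu=\sum_{e\in E}g_e(s_e)|ds_e|+\sum_{v\in V}\lambda_v v+\sum_{e\in D}\lambda_e e$ with $g_e\in\mathbb Q[s_e]$, $g_{e^{-1}}(s)=g_e(\ell(e)-s)$, $\lambda_v,\lambda_e\in\mathbb Q$; $\mathcal M^0(\Gamma)$ consists of those with $\sum_{e\in E^+}\int_0^{\ell(e)}g_e+\sum_v\lambda_v+\sum_{e\in D}\lambda_e=0$. $\Omega_{\log}(\Gamma)$ is the space of functions $f$ on rational vertices whose restriction $f_e$ to each edge is a polynomial in arc length and to each half-edge an affine function. The Laplacian $\Delta\colon\Omega_{\log}\to\mathcal M(\Gamma)$ is $\Delta f=-\sum_{e\in E}f_e''|ds_e|-\sum_v\left(\sum_{s(e)=v}f_e'(0)\right)v+\sum_{e\in D}f'_e\,e$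 (sum over edges and half-edges with source $v$). $\Delta$ has kernel the constants and image $\mathcal M^0(\Gamma)$. Integration: $\int f\,d\mu=\sum_{e\in E^+}\int_0^{\ell(e)}f_eg_e\,ds_e+\sum_v\lambda_vf(v)+\sum_{e\in D}\lambda_ef(s(e))$. Height pairing on $\mathcal M^0$: $\langle\mu,\nu\rangle=\int\Delta^{-1}(\mu)\,d\nu$ for any preimage $\Delta^{-1}(\mu)$ (independent of choice; symmetric). *)

(* Defs.v *)
From HB Require Import structures.
From mathcomp Require Import all_boot all_order all_algebra.
From Stdlib Require Import ClassicalEpsilon.

Set Implicit Arguments.
Unset Strict Implicit.
Unset Printing Implicit Defensive.

Import Order.TTheory GRing.Theory Num.Theory.
Local Open Scope ring_scope.

(* Raw data of a rationally metrised graph: vertices V, oriented edges E,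
   half-edges D, source maps, edge inversion, edge lengths.            *)
Record rmgraph := RGraph {
  gV : finType; gE : finType; gD : finType;
  src : gE -> gV;
  inv : gE -> gE;
  srcD : gD -> gV;
  len : gE -> rat }.

Definition tgt (G : rmgraph) (e : gE G) : gV G := src (inv e).

Definition adjacent (G : rmgraph) : rel (gV G) :=
  fun u v => [exists e : gE G, (src e == u) && (tgt e == v)].

Definition is_rmg (G : rmgraph) : Prop :=
  [/\ (forall e : gE G, inv (inv e) = e),
      (forall e : gE G, inv e != e),
      (forall e : gE G, 0 < len e),
      (forall e : gE G, len (inv e) = len e) &
      (forall u v, connect (@adjacent G) u v)].

(* unoriented edges E^+ : one chosen orientation of each pair {e, e^{-1}} *)
Definition Eplus (G : rmgraph) : pred (gE G) :=
  fun e => (enum_rank e < enum_rank (inv e))%N.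
Arguments Eplus : clear implicits.

(* Rational vertices: a vertex, a point at distance t along an edge e
   (0 < t < len e), or a point at distance t along a half-edge (0 < t).
   (PE e t) and (PE (inv e) (len e - t)) denote the same point.         *)
Inductive pt (G : rmgraph) : Type :=
  | PV of gV G
  | PE of gE G & rat
  | PD of gD G & rat.
Arguments PV {G}. Arguments PE {G}. Arguments PD {G}.

Definition valid_pt (G : rmgraph) (x : pt G) : Prop :=
  match x with
  | PV _ => True
  | PE e t => 0 < t < len e
  | PD _ t => 0 < t
  end.

(* Measures (piecewise polynomial with log poles on D):
   sum_e g_e |ds_e| + sum_v lambda_v v + sum_{e in D} lambda_e e.       *)
Record meas (G : rmgraph) := Meas {
  dens : gE G -> {poly rat};
  mV : gV G -> rat;
  mD : gD G -> rat }.
Arguments Meas {G}.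

(* antiderivative vanishing at 0, so that int_0^l p = (prim p).[l] *)
Definition prim (p : {poly rat}) : {poly rat} :=
  \poly_(i < (size p).+1) (if i is j.+1 then p`_j / j.+1%:R else 0).

Definition is_meas (G : rmgraph) (mu : meas G) : Prop :=
  forall e : gE G, dens mu (inv e) = dens mu e \Po ((len e)%:P - 'X).

Definition total_mass (G : rmgraph) (mu : meas G) : rat :=
  \sum_(e in Eplus G) (prim (dens mu e)).[len e]
  + \sum_(v : gV G) mV mu v + \sum_(d : gD G) mD mu d.

Definition in_M0 (G : rmgraph) (mu : meas G) : Prop :=
  is_meas mu /\ total_mass mu = 0.

(* Omega_log: f on rational vertices (respecting the identification
   PE e t = PE (inv e) (len e - t)) whose restriction to each (closed)
   edge e is the polynomial P e in arc length s_e, and whose restriction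
   to each half-edge d (with its source) is the affine polynomial Q d.  *)
Definition repr (G : rmgraph) (f : pt G -> rat)
    (P : gE G -> {poly rat}) (Q : gD G -> {poly rat}) : Prop :=
  [/\ (forall e t, 0 < t < len e -> f (PE (inv e) (len e - t)) = f (PE e t)),
      (forall e t, 0 < t < len e -> f (PE e t) = (P e).[t]),
      (forall e, f (PV (src e)) = (P e).[0]),
      (forall d, (size (Q d) <= 2)%N) &
      (forall d, f (PV (srcD d)) = (Q d).[0] /\
                 forall t, 0 < t -> f (PD d t) = (Q d).[t])].

Definition in_Omega_log (G : rmgraph) (f : pt G -> rat) : Prop :=
  exists P Q, repr f P Q.

Definition lap_is (G : rmgraph) (P : gE G -> {poly rat}) (Q : gD G -> {poly rat})
    (mu : meas G) : Prop :=
  [/\ (forall e, dens mu e = - (P e)^`(2)),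
      (forall v, mV mu v = - (\sum_(e : gE G | src e == v) (P e)^`().[0]
                              + \sum_(d : gD G | srcD d == v) (Q d)^`().[0])) &
      (forall d, mD mu d = (Q d)^`().[0])].

(* Delta f = mu (the polynomial pieces of f are uniquely determined by f) *)
Definition laplacian_eq (G : rmgraph) (f : pt G -> rat) (mu : meas G) : Prop :=
  exists P Q, repr f P Q /\ lap_is P Q mu.

Definition integ (G : rmgraph) (f : pt G -> rat) (P : gE G -> {poly rat})
    (mu : meas G) : rat :=
  \sum_(e in Eplus G) (prim (P e * dens mu e)).[len e]
  + \sum_(v : gV G) mV mu v * f (PV v)
  + \sum_(d : gD G) mD mu d * f (PV (srcD d)).

(* height pairing <m1, m2> = int Delta^{-1}(m1) dm2, for a (chosen) preimage *)
Definition pairing (G : rmgraph) (m1 m2 : meas G) : rat :=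
  epsilon (inhabits (0 : rat))
    (fun c => exists F P Q, repr F P Q /\ lap_is P Q m1 /\ c = integ F P m2).

Definition delta2 (G : rmgraph) (v w : gV G) : meas G :=
  Meas (fun _ => 0) (fun u => (u == v)%:R - (u == w)%:R) (fun _ => 0).

(* Subdivision of an edge e0 at distance t0 (from src e0).
   New vertex: None.  The edges e0, inv e0 are replaced by (o,h):
   o = true: oriented as e0, o = false: oriented as inv e0;
   h = true: the half starting at an old vertex, h = false: the half
   starting at the new vertex.                                        *)
Section SubdivEdge.
Variables (G : rmgraph) (e0 : gE G) (t0 : rat).

Definition oldE := {e : gE G | (e != e0) && (e != inv e0)}.

Definition sE_src (s : (oldE + (bool * bool))%type) : option (gV G) :=
  match s with
  | inl e => Some (src (val e))
  | inr (true, true) => Some (src e0)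
  | inr (false, true) => Some (src (inv e0))
  | inr (_, false) => None
  end.

Definition sE_inv (s : (oldE + (bool * bool))%type) : (oldE + (bool * bool))%type :=
  match s with
  | inl e => match (insub (inv (val e)) : option oldE) with
             | Some e' => inl e'
             | None => inr (true, true)
             end
  | inr (o, h) => inr (~~ o, ~~ h)
  end.

Definition sE_len (s : (oldE + (bool * bool))%type) : rat :=
  match s with
  | inl e => len (val e)
  | inr (o, h) => if o == h then t0 else len e0 - t0
  end.

Definition subdivE : rmgraph :=
  @RGraph (option (gV G)) (oldE + (bool * bool))%type (gD G)
    sE_src sE_inv (fun d => Some (srcD d)) sE_len.

Definition embE (x : pt G) : pt subdivE :=
  match x with
  | PV v => @PV subdivE (Some v)
  | PE e t =>
      if e == e0 then
        (if t < t0 then @PE subdivE (inr (true, true)) t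
         else if t == t0 then @PV subdivE None
         else @PE subdivE (inr (true, false)) (t - t0))
      else if e == inv e0 then
        (let t1 := len e0 - t0 in
         if t < t1 then @PE subdivE (inr (false, true)) t
         else if t == t1 then @PV subdivE None
         else @PE subdivE (inr (false, false)) (t - t1))
      else match (insub e : option oldE) with
           | Some e' => @PE subdivE (inl e') t
           | None => @PV subdivE None
           end
  | PD d t => @PD subdivE d t
  end.

Definition pullE (m : meas G) : meas subdivE :=
  @Meas subdivE
    (fun s => match s with
              | inl e => dens m (val e)
              | inr (true, true) => dens m e0
              | inr (true, false) => dens m e0 \Po ('X + t0%:P)
              | inr (false, true) => dens m (inv e0)
              | inr (false, false) => dens m (inv e0) \Po ('X + (len e0 - t0)%:P)
              end)
    (fun v => if v is Some v' then mV m v' else 0)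
    (mD m).
End SubdivEdge.

(* Subdivision of a half-edge d0 at distance t0: a new vertex None, a new
   edge pair inr true (src d0 -> new), inr false (new -> src d0) of
   length t0, and d0 now starts at the new vertex.                      *)
Section SubdivHalfEdge.
Variables (G : rmgraph) (d0 : gD G) (t0 : rat).

Definition sD_src (s : (gE G + bool)%type) : option (gV G) :=
  match s with
  | inl e => Some (src e)
  | inr true => Some (srcD d0)
  | inr false => None
  end.

Definition sD_inv (s : (gE G + bool)%type) : (gE G + bool)%type :=
  match s with inl e => inl (inv e) | inr b => inr (~~ b) end.

Definition sD_len (s : (gE G + bool)%type) : rat :=
  match s with inl e => len e | inr _ => t0 end.

Definition subdivD : rmgraph :=
  @RGraph (option (gV G)) (gE G + bool)%type (gD G)
    sD_src sD_inv (fun d => if d == d0 then None else Some (srcD d)) sD_len.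

Definition embD (x : pt G) : pt subdivD :=
  match x with
  | PV v => @PV subdivD (Some v)
  | PE e t => @PE subdivD (inl e) t
  | PD d t =>
      if d == d0 then
        (if t < t0 then @PE subdivD (inr true) t
         else if t == t0 then @PV subdivD None
         else @PD subdivD d0 (t - t0))
      else @PD subdivD d t
  end.

Definition pullD (m : meas G) : meas subdivD :=
  @Meas subdivD
    (fun s => match s with inl e => dens m e | inr _ => 0 end)
    (fun v => if v is Some v' then mV m v' else 0)
    (mD m).
End SubdivHalfEdge.

Definition subdiv (G : rmgraph) (p : pt G) : rmgraph :=
  match p with
  | PV _ => G
  | PE e t => subdivE e t
  | PD d t => subdivD d t
  end.

Definition emb (G : rmgraph) (p : pt G) : pt G -> pt (subdiv p) :=
  match p as q return pt G -> pt (subdiv q) with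
  | PV _ => id
  | PE e t => @embE G e t
  | PD d t => @embD G d t
  end.

Definition vemb (G : rmgraph) (p : pt G) : gV G -> gV (subdiv p) :=
  match p as q return gV G -> gV (subdiv q) with
  | PV _ => id
  | PE _ _ => fun v => Some v
  | PD _ _ => fun v => Some v
  end.

Definition newv (G : rmgraph) (p : pt G) : gV (subdiv p) :=
  match p as q return gV (subdiv q) with
  | PV v => v
  | PE _ _ => None
  | PD _ _ => None
  end.

Definition pull (G : rmgraph) (p : pt G) : meas G -> meas (subdiv p) :=
  match p as q return meas G -> meas (subdiv q) with
  | PV _ => id
  | PE e t => @pullE G e t
  | PD d t => @pullD G d t
  end.

(* f(x) = < x - b, mu >, computed on Gamma subdivided at x and at b *)
Definition hp_fun (G : rmgraph) (mu : meas G) (b : pt G) (x : pt G) : rat :=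
  let G1 := subdiv x in
  let b1 := emb x b in
  let G2 := subdiv b1 in
  pairing (delta2 (vemb b1 (newv x)) (newv b1)) (pull b1 (pull x mu)).

(* Main.v *)
Require Import Defs.
From mathcomp Require Import all_boot all_order all_algebra.
From mathcomp Require Import ring lra zify.
From Stdlib Require Import ClassicalEpsilon.
Require Import Defs.
Import Order.TTheory GRing.Theory Num.Theory.
Set Implicit Arguments.
Unset Strict Implicit.
Unset Printing Implicit Defensive.
Local Open Scope ring_scope.

Lemma deriv0_const (p : {poly rat}) : p^`() = 0 -> p = (p.[0])%:P.
Proof.
move=> h; rewrite horner_coef0; apply/polyP=> i; rewrite coefC.
case: i=> [|i] //=.
have := congr1 (fun q : {poly rat} => q`_i) h.
rewrite coef_deriv coef0 => /eqP; rewrite mulrn_eq0 /= => /eqP ->.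
by [].
Qed.

Lemma prim_deriv (p : {poly rat}) : (prim p)^`() = p.
Proof.
apply/polyP=> i; rewrite coef_deriv /prim coef_poly ltnS.
case: ltnP=> hi.
  by rewrite -(mulr_natr (p`_i / _)) divfK // pnatr_eq0.
by rewrite mul0rn nth_default.
Qed.

Lemma prim0 (p : {poly rat}) : (prim p).[0] = 0.
Proof. by rewrite horner_coef0 /prim coef_poly. Qed.

Lemma prim_ftc (p r : {poly rat}) (l : rat) :
  r^`() = p -> (prim p).[l] = r.[l] - r.[0].
Proof.
move=> h.
have h0 : (prim p - r)^`() = 0 by rewrite derivB prim_deriv h subrr.
have := deriv0_const h0.
move=> /(congr1 (fun q : {poly rat} => q.[l])).
rewrite hornerC !hornerE prim0 => e.
by rewrite -[LHS](subrK r.[l]) e; ring.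
Qed.

Lemma prim_lin (p q : {poly rat}) (a : rat) (l : rat) :
  (prim (a *: p + q)).[l] = a * (prim p).[l] + (prim q).[l].
Proof.
rewrite (@prim_ftc _ (a *: prim p + prim q)); last by rewrite derivD derivZ !prim_deriv.
rewrite !hornerE !prim0; ring.
Qed.

Lemma poly_itv (p q : {poly rat}) (l : rat) : 0 < l ->
  (forall t, 0 < t < l -> p.[t] = q.[t]) -> p = q.
Proof.
move=> l0 h; apply/eqP; rewrite -subr_eq0; apply/negPn/negP=> nz.
set r := p - q in nz.
pose rs := [seq l / (k.+2)%:R | k <- iota 0 (size r)].
have := max_poly_roots nz.
move=> /(_ rs).
have -> : all (root r) rs.
  apply/allP=> x /mapP [k _ ->]; rewrite /root /r hornerD hornerN h ?subrr //.
  have k0 : 0 < (k.+2)%:R :> rat by rewrite ltr0n.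
  rewrite divr_gt0 //= ltr_pdivrMr //.
  have : 1 < (k.+2)%:R :> rat by rewrite ltr1n.
  nra.
have -> : uniq rs.
  rewrite map_inj_uniq ?iota_uniq // => a b /= e.
  have : (a.+2)%:R^-1 = (b.+2)%:R^-1 :> rat.
    by apply: (mulfI (lt0r_neq0 l0)).
  by move/invr_inj/eqP; rewrite eqr_nat => /eqP [].
by rewrite size_map size_iota ltnn => /(_ isT isT).
Qed.

Lemma poly_ext (p q : {poly rat}) : (forall x, p.[x] = q.[x]) -> p = q.
Proof. by move=> h; apply: (@poly_itv _ _ 1) => // t _; apply: h. Qed.

Lemma deriv_shift (p : {poly rat}) (c : rat) :
  (p \Po ('X + c%:P))^`() = p^`() \Po ('X + c%:P).
Proof. by rewrite deriv_comp derivD derivX derivC addr0 mulr1. Qed.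

Lemma deriv_refl (p : {poly rat}) (c : rat) :
  (p \Po (c%:P - 'X))^`() = - (p^`() \Po (c%:P - 'X)).
Proof. by rewrite deriv_comp derivB derivX derivC sub0r mulrN1. Qed.

Lemma derivn2 (p : {poly rat}) : p^`(2) = p^`()^`().
Proof. by []. Qed.

Lemma small_deriv (p : {poly rat}) : (size p <= 2)%N ->
  p^`(2) = 0 /\ forall x, p^`().[x] = p^`().[0].
Proof.
move=> hs.
have h1 : (size p^`() <= 1)%N.
  case: (eqVneq p 0) => [->|nz]; first by rewrite deriv0 size_poly0.
  by have := lt_size_deriv nz; lia.
rewrite derivn2 (size1_polyC h1) derivC; split=> // x; by rewrite !hornerC.
Qed.

Definition gax (H : rmgraph) : Prop :=
  [/\ (forall e : gE H, inv (inv e) = e), (forall e : gE H, inv e != e),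
      (forall e : gE H, 0 < len e) & (forall e : gE H, len (inv e) = len e)].

Lemma gax_of (H : rmgraph) : is_rmg H -> gax H.
Proof. by case. Qed.

Lemma Eplus_inv (H : rmgraph) (ax : gax H) (e : gE H) :
  (inv e \in Eplus H) = (e \notin Eplus H).
Proof.
case: ax => iK ine _ _.
rewrite !unfold_in /Eplus iK ltnNge leq_eqVlt.
have -> : (enum_rank e == enum_rank (inv e) :> nat) = false.
  apply/negbTE; apply/negP => /eqP /val_inj /enum_rank_inj h.
  by move: (ine e); rewrite -h eqxx.
by [].
Qed.

Lemma sum_pairs (H : rmgraph) (ax : gax H) (h : gE H -> rat) :
  \sum_(e : gE H) h e = \sum_(e in Eplus H) (h e + h (inv e)).
Proof.
have iK := let: And4 a _ _ _ := ax in a.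
rewrite big_split /= (bigID (fun e => e \in Eplus H)) /=; congr (_ + _).
rewrite (reindex_inj (can_inj iK)) /=.
by apply: eq_bigl => e; rewrite Eplus_inv // negbK.
Qed.

Lemma sum_fiber (A B : finType) (f : A -> B) (G : B -> A -> rat) :
  \sum_(b : B) \sum_(a | f a == b) G b a = \sum_(a : A) G (f a) a.
Proof.
under eq_bigr do rewrite big_mkcond.
rewrite exchange_big; apply: eq_bigr => a _.
rewrite (bigD1 (f a)) //= eqxx big1 ?addr0 // => b nb.
by rewrite eq_sym (negbTE nb).
Qed.

Lemma repr_inv (H : rmgraph) (ax : gax H) F P Q :
  @repr H F P Q -> forall e, P (inv e) = P e \Po ((len e)%:P - 'X).
Proof.
case: ax => iK _ lp li [r1 r2 _ _ _] e.
apply: (@poly_itv _ _ (len e)) => // t ht.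
have ht' : 0 < t < len (inv e) by rewrite li.
have ht2 : 0 < len e - t < len e.
  by move: ht => /andP [a b]; apply/andP; split; lra.
rewrite horner_comp !hornerE -r2 // -r2 // -(r1 (inv e)) // iK li //.
Qed.

Definition mkF (H : rmgraph) (a : gV H -> rat) (P : gE H -> {poly rat})
  (Q : gD H -> {poly rat}) (z : pt H) : rat :=
  match z with PV v => a v | PE e t => (P e).[t] | PD d t => (Q d).[t] end.

Definition Sol (H : rmgraph) (m : meas H) a P Q : Prop :=
  [/\ (forall e : gE H, P (inv e) = P e \Po ((len e)%:P - 'X)),
      (forall e, (P e).[0] = a (src e)),
      (forall d, (Q d).[0] = a (srcD d)),
      (forall d, (size (Q d) <= 2)%N) & @lap_is H P Q m].

Lemma repr_mkF (H : rmgraph) (m : meas H) a P Q :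
  Sol m a P Q -> repr (mkF a P Q) P Q.
Proof.
case=> h1 h2 h3 h4 _; split => //=.
by move=> e t _; rewrite h1 horner_comp !hornerE; congr (_.[_]); ring.
Qed.

Lemma green (H : rmgraph) (ax : gax H) F P Q F' P' Q' m' :
  repr F P Q -> repr F' P' Q' -> lap_is P' Q' m' ->
  integ F P m' = \sum_(e in Eplus H) (prim ((P e)^`() * (P' e)^`())).[len e].
Proof.
move=> rF rF' [l1 l2 l3].
have iK := let: And4 a _ _ _ := ax in a.
have li := let: And4 _ _ _ a := ax in a.
have PI := repr_inv ax rF; have PI' := repr_inv ax rF'.
case: rF => _ _ r3 _ _.
rewrite /integ.
have -> : \sum_(d : gD H) mD m' d * F (PV (srcD d)) =
   \sum_(d : gD H) (Q' d)^`().[0] * F (PV (srcD d)).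
  by apply: eq_bigr => d _; rewrite l3.
have -> : \sum_(v : gV H) mV m' v * F (PV v)
   = - \sum_(e : gE H) (P e).[0] * (P' e)^`().[0]
     - \sum_(d : gD H) (Q' d)^`().[0] * F (PV (srcD d)).
  under eq_bigr do rewrite l2.
  rewrite -(sum_fiber (@src H) (fun v e => ((P e).[0] * (P' e)^`().[0]))).
  rewrite -(sum_fiber (@srcD H) (fun v d => ((Q' d)^`().[0] * F (PV v)))).
  rewrite -!sumrN -big_split /=; apply: eq_bigr => v _.
  rewrite mulNr mulrDl opprD !big_distrl -!sumrN /=; congr (_ + _);
    apply: eq_bigr => x /eqP <-.
    by rewrite r3 mulrC.
rewrite addrA subrK (sum_pairs ax) -sumrN -big_split /=.
apply: eq_bigr => e _.
rewrite l1 PI PI' deriv_refl !hornerE !horner_comp !hornerE.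
rewrite (@prim_ftc _ (- (P e * (P' e)^`()) + prim ((P e)^`() * (P' e)^`()))).
  rewrite !hornerE !prim0; ring.
by rewrite derivD derivN derivM prim_deriv derivn2; ring.
Qed.

Definition Lmap (H : rmgraph) (a : gV H -> rat) (v : gV H) : rat :=
  \sum_(e | src e == v) (a (tgt e) - a (src e)) / len e.

Lemma Lmap_sum (H : rmgraph) (ax : gax H) (a : gV H -> rat) : \sum_(v : gV H) Lmap a v = 0.
Proof.
case: (ax) => iK _ _ li.
rewrite /Lmap (sum_fiber (@src H) (fun _ e => (a (tgt e) - a (src e)) / len e)).
rewrite (sum_pairs ax) big1 // => e _.
rewrite /tgt iK li; ring.
Qed.

Lemma Lmap_energy (H : rmgraph) (ax : gax H) (a : gV H -> rat) :
  \sum_(v : gV H) a v * Lmap a v =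
  - \sum_(e in Eplus H) (a (tgt e) - a (src e)) ^+ 2 / len e.
Proof.
case: (ax) => iK _ _ li.
under eq_bigr do rewrite /Lmap big_distrr.
rewrite /= (sum_fiber (@src H) (fun v e => a v * ((a (tgt e) - a (src e)) / len e))).
rewrite (sum_pairs ax) -sumrN; apply: eq_bigr => e _.
rewrite /tgt iK li; ring.
Qed.

Lemma Lmap_ker (H : rmgraph) (hr : is_rmg H) (a : gV H -> rat) :
  (forall v, Lmap a v = 0) -> forall u v, a u = a v.
Proof.
have ax := gax_of hr.
case: (ax) => iK _ lp li; case: hr => _ _ _ _ conn.
move=> h.
have E : \sum_(e in Eplus H) (a (tgt e) - a (src e)) ^+ 2 / len e = 0.
  apply/eqP; rewrite -oppr_eq0 -(Lmap_energy ax); apply/eqP.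
  by rewrite big1 // => v _; rewrite h mulr0.
have Ep : forall e, e \in Eplus H -> a (tgt e) = a (src e).
  move=> e he.
  have := psumr_eq0P (fun i _ => divr_ge0 (sqr_ge0 _) (ltW (lp i))) E he.
  move/eqP; rewrite mulf_eq0 invr_eq0 (negbTE (lt0r_neq0 (lp e))) orbF sqrf_eq0 subr_eq0.
  by move/eqP.
have Ea : forall e, a (tgt e) = a (src e).
  move=> e; case: (boolP (e \in Eplus H)) => he; first exact: Ep.
  by have := Ep (inv e); rewrite Eplus_inv // he /tgt iK => /(_ isT) ->.
move=> u v.
have cl : closed (@adjacent H) [pred w | a w == a u].
  move=> x y /existsP [e /andP [/eqP <- /eqP <-]].
  by rewrite !inE Ea.
have := closed_connect cl (conn u v).
by rewrite !inE eqxx => /esym /eqP.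
Qed.

Lemma sel_sum (n : nat) (F : 'I_n -> rat) (k : 'I_n) :
  \sum_(i < n) F i * (k == i)%:R = F k.
Proof.
rewrite (bigD1 k) //= eqxx mulr1 big1 ?addr0 // => i ni.
by rewrite eq_sym (negbTE ni) mulr0.
Qed.

Lemma sum_enum (T : finType) (F : T -> rat) :
  \sum_(v : T) F v = \sum_(j < #|T|) F (enum_val j).
Proof.
rewrite (reindex (@enum_val T predT)) //.
by apply: onW_bij; exists enum_rank; [exact: enum_valK | exact: enum_rankK].
Qed.

Lemma Lmap_solve (H : rmgraph) (hr : is_rmg H) (beta : gV H -> rat) :
  \sum_(v : gV H) beta v = 0 -> exists a, forall v, Lmap a v = beta v.
Proof.
move=> sb.
have ax := gax_of hr.
pose n := #|gV H|.
pose A : 'M[rat]_n := \matrix_(i, j) @Lmap H (fun w => (enum_rank w == i)%:R) (enum_val j).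
have mulA : forall (u : 'rV[rat]_n) j,
    (u *m A) 0 j = Lmap (fun w => u 0 (enum_rank w)) (enum_val j).
  move=> u j; rewrite !mxE.
  under eq_bigr do rewrite mxE /Lmap big_distrr.
  rewrite exchange_big /=; apply: eq_bigr => e _.
  under eq_bigr do rewrite mulrA mulrBr.
  by rewrite -big_distrl /= sumrB !sel_sum.
pose ones : 'cV[rat]_n := const_mx 1.
have Aones : A *m ones = 0.
  apply/matrixP => i k; rewrite !mxE.
  under eq_bigr do rewrite !mxE mulr1.
  by rewrite -(sum_enum (@Lmap H (fun w => (enum_rank w == i)%:R))) Lmap_sum.
pose onesr : 'rV[rat]_n := const_mx 1.
have kerA : (kermx A <= onesr)%MS.
  apply/row_subP => i.
  set ri := row i (kermx A).
  have h0 : ri *m A = 0 by rewrite /ri -row_mul mulmx_ker row0.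
  have hc : forall u v, ri 0 (enum_rank u) = ri 0 (enum_rank v).
    apply: (@Lmap_ker H hr (fun w => ri 0 (enum_rank w))) => v.
    by rewrite -(enum_rankK v) -mulA h0 mxE.
  clearbody ri.
  apply/sub_rVP; exists (ri 0 i); apply/rowP => j; rewrite !mxE mulr1.
  by rewrite -(enum_valK j) -(enum_valK i) (hc _ (enum_val i)).
have rk : (n - \rank A <= 1)%N.
  rewrite -mxrank_ker; apply: leq_trans (mxrankS kerA) _.
  exact: rank_leq_row.
pose S := kermx ones.
have AS : (A <= S)%MS by rewrite sub_kermx Aones.
have rS : (\rank S <= \rank A)%N.
  rewrite mxrank_ker.
  case: (posnP n) => [n0|np].
    lia.
  have : \rank ones = 1%N.
    apply/eqP; rewrite eqn_leq rank_leq_col lt0n mxrank_eq0.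
    apply/negP => /eqP /matrixP /(_ (Ordinal np) 0); rewrite !mxE => /eqP.
    by rewrite oner_eq0.
  move=> ->; lia.
have SA : (S <= A)%MS.
  rewrite -(mxrank_leqif_sup AS).2 eqn_leq rS andbT.
  exact: mxrankS.
pose b : 'rV[rat]_n := \row_j beta (enum_val j).
have bS : (b <= S)%MS.
  rewrite sub_kermx; apply/eqP/matrixP => i k; rewrite !mxE.
  under eq_bigr do rewrite !mxE mulr1.
  by rewrite -(sum_enum beta).
have /submxP [D hD] := submx_trans bS SA.
exists (fun w => D 0 (enum_rank w)) => v.
have := mulA D (enum_rank v); rewrite enum_rankK -hD mxE => <-.
by rewrite enum_rankK.
Qed.

Definition aff (c k : rat) : {poly rat} := c%:P + k%:P * 'X.

Lemma aff_size c k : (size (aff c k) <= 2)%N.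
Proof.
apply: leq_trans (size_polyD _ _) _; rewrite geq_max.
rewrite (leq_trans (size_polyC_leq1 _)) //= mul_polyC.
by apply: leq_trans (size_scale_leq _ _) _; rewrite size_polyX.
Qed.

Lemma aff_horner c k x : (aff c k).[x] = c + k * x.
Proof. by rewrite /aff !hornerE. Qed.

Lemma aff_deriv c k : (aff c k)^`() = k%:P.
Proof. by rewrite /aff derivD derivC deriv_mulC derivX mulr1 add0r. Qed.

Lemma aff_deriv2 c k : (aff c k)^`(2) = 0.
Proof. by rewrite derivn2 aff_deriv derivC. Qed.

Lemma deriv2_refl (p : {poly rat}) (c : rat) :
  (p \Po (c%:P - 'X))^`(2) = p^`(2) \Po (c%:P - 'X).
Proof. by rewrite !derivn2 deriv_refl derivN deriv_refl opprK. Qed.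

Lemma deriv2_shift (p : {poly rat}) (c : rat) :
  (p \Po ('X + c%:P))^`(2) = p^`(2) \Po ('X + c%:P).
Proof. by rewrite !derivn2 !deriv_shift. Qed.

Section Exist.
Variables (H : rmgraph) (hr : is_rmg H) (m : meas H) (hm : in_M0 m).

Let ax := gax_of hr.
Let iK : forall e : gE H, inv (inv e) = e. Proof. by case: ax. Qed.
Let lp : forall e : gE H, 0 < len e. Proof. by case: ax. Qed.
Let li : forall e : gE H, len (inv e) = len e. Proof. by case: ax. Qed.

Let R0 (e : gE H) : {poly rat} := - prim (prim (dens m e)).
Let R (e : gE H) : {poly rat} :=
  if e \in Eplus H then R0 e else R0 (inv e) \Po ((len e)%:P - 'X).

Let refl2 (p : {poly rat}) (l : rat) :
  (p \Po (l%:P - 'X)) \Po (l%:P - 'X) = p.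
Proof. by apply: poly_ext => x; rewrite !horner_comp !hornerE; congr (_.[_]); ring. Qed.

Let RI e : R (inv e) = R e \Po ((len e)%:P - 'X).
Proof.
rewrite /R Eplus_inv //; case: (boolP (e \in Eplus H)) => he /=.
  by rewrite iK li.
by rewrite refl2.
Qed.

Let R2 e : (R e)^`(2) = - dens m e.
Proof.
case: hm => hmeas _.
rewrite /R; case: (e \in Eplus H).
  by rewrite /R0 derivn2 !derivN !prim_deriv.
rewrite deriv2_refl /R0 derivn2 !derivN !prim_deriv.
have := hmeas (inv e); rewrite iK li => ->.
by apply: poly_ext => x; rewrite hornerN !horner_comp hornerN.
Qed.

Let beta (v : gV H) : rat :=
  - mV m v - \sum_(d | srcD d == v) mD m d
  - \sum_(e | src e == v) ((R e)^`().[0] + ((R e).[0] - (R e).[len e]) / len e).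

Let beta_sum : \sum_(v : gV H) beta v = 0.
Proof.
case: hm => _ tm.
rewrite /beta !big_split /= !sumrN.
rewrite (sum_fiber (@srcD H) (fun _ d => mD m d)).
rewrite (sum_fiber (@src H) (fun _ e => ((R e)^`().[0] + ((R e).[0] - (R e).[len e]) / len e))).
rewrite (sum_pairs ax).
have -> : \sum_(e in Eplus H) ((R e)^`().[0] + ((R e).[0] - (R e).[len e]) / len e +
        ((R (inv e))^`().[0] + ((R (inv e)).[0] - (R (inv e)).[len (inv e)]) / len (inv e)))
   = \sum_(e in Eplus H) (prim (dens m e)).[len e].
  apply: eq_bigr => e _.
  rewrite (@prim_ftc _ (- (R e)^`())); last by rewrite derivN -derivn2 R2 opprK.
  rewrite RI deriv_refl li !hornerE !horner_comp !hornerE subrr.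
  have := lp e; rewrite lt0r => /andP [ne _].
  by simpl; field.
transitivity (- total_mass m); last by rewrite tm oppr0.
rewrite /total_mass; simpl; ring.
Qed.

Lemma exists_sol : exists a P Q, Sol m a P Q.
Proof.
have [a ha] := Lmap_solve hr beta_sum.
pose k e := (a (tgt e) - a (src e) - (R e).[len e] + (R e).[0]) / len e.
pose P e := R e + aff (a (src e) - (R e).[0]) (k e).
pose Q d := aff (a (srcD d)) (mD m d).
exists a, P, Q; split.
- move=> e; apply: poly_ext => x.
  rewrite /P /k /aff /= horner_comp !hornerE RI !horner_comp !hornerE.
  rewrite li /tgt iK subrr.
  have := lp e; rewrite lt0r => /andP [ne _].
  by simpl; field.
- by move=> e; rewrite /P /aff /= !hornerE; simpl; ring.
- by move=> d; rewrite /Q aff_horner; simpl; ring.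
- by move=> d; exact: aff_size.
split.
- by move=> e; rewrite /P derivnD aff_deriv2 addr0 R2 opprK.
- move=> v.
  have -> : \sum_(e | src e == v) (P e)^`().[0] =
      Lmap a v + \sum_(e | src e == v) ((R e)^`().[0] + ((R e).[0] - (R e).[len e]) / len e).
    rewrite /Lmap -big_split /=; apply: eq_bigr => e _.
    rewrite /P derivD aff_deriv !hornerE /k.
    have := lp e; rewrite lt0r => /andP [ne _].
    by simpl; field.
  have -> : \sum_(d | srcD d == v) (Q d)^`().[0] = \sum_(d | srcD d == v) mD m d.
    by apply: eq_bigr => d _; rewrite /Q aff_deriv hornerC.
  rewrite ha /beta; simpl; ring.
- by move=> d; rewrite /Q aff_deriv hornerC.
Qed.
End Exist.

Lemma adj_intro (H : rmgraph) (s : gE H) x y :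
  src s = x -> tgt s = y -> @adjacent H x y.
Proof. by move=> <- <-; apply/existsP; exists s; rewrite !eqxx. Qed.

Lemma adj_sym (H : rmgraph) (iK : forall e : gE H, inv (inv e) = e) :
  symmetric (@adjacent H).
Proof.
move=> x y; apply/existsP/existsP => -[e /andP [/eqP hs /eqP ht]];
  exists (inv e); by rewrite /tgt iK -/(tgt e) hs ht !eqxx.
Qed.

Lemma conn_from (H : rmgraph) (iK : forall e : gE H, inv (inv e) = e) r :
  (forall w, connect (@adjacent H) r w) -> forall u v, connect (@adjacent H) u v.
Proof.
move=> h u v; apply: connect_trans (h v).
by rewrite (sym_connect_sym (adj_sym iK)).
Qed.

Lemma lift_conn (H H' : rmgraph) (iK : forall e : gE H, inv (inv e) = e)
  (iK' : forall e : gE H', inv (inv e) = e) (h : gV H -> gV H') :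
  (forall x y, @adjacent H x y -> connect (@adjacent H') (h x) (h y)) ->
  forall x y, connect (@adjacent H) x y -> connect (@adjacent H') (h x) (h y).
Proof.
move=> hh x y cxy.
have cl : closed (@adjacent H) [pred w | connect (@adjacent H') (h x) (h w)].
  move=> u w auw; rewrite !inE; apply/idP/idP => c.
    exact: connect_trans c (hh _ _ auw).
  apply: connect_trans c _; rewrite (sym_connect_sym (adj_sym iK')).
  exact: hh _ _ auw.
by move/(closed_connect cl): cxy; rewrite !inE connect0 => <-.
Qed.

Lemma sum_sub (T : finType) (p : pred T) (Pr : pred T) (F : T -> rat) :
  \sum_(x : {e : T | p e} | Pr (val x)) F (val x) = \sum_(e | p e && Pr e) F e.
Proof.
rewrite (reindex_omap (val : {e : T | p e} -> T) insub); last first.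
  by move=> i /andP[iA Pi]; rewrite insubT.
by apply: eq_bigl=> -[i iA]/=; rewrite insubT ?iA /= eqxx andbT.
Qed.

Lemma sum_bb (F : bool * bool -> rat) :
  \sum_(x : bool * bool) F x = F (true, true) + F (true, false) + F (false, true) + F (false, false).
Proof.
transitivity (\sum_(a : bool) \sum_(b : bool) F (a, b)).
  by rewrite pair_big /=; apply: eq_big => [[a b]|[a b] _].
by rewrite !big_bool /=; ring.
Qed.

Lemma sum_split2 (T : finType) (x y : T) (F : T -> rat) : x != y ->
  \sum_(e : T) F e = F x + F y + \sum_(e | (e != x) && (e != y)) F e.
Proof.
move=> nxy; rewrite (bigD1 x) //= (bigD1 y) //=; last by rewrite eq_sym.
by rewrite addrA; congr (_ + _); apply: eq_bigl => e; rewrite andbC.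
Qed.

Lemma comp_polyNl (p r : {poly rat}) : (- p) \Po r = - (p \Po r).
Proof. by apply: poly_ext => x; rewrite hornerN !horner_comp hornerN. Qed.

Section SubE.
Variables (H : rmgraph) (hr : is_rmg H) (e0 : gE H) (t0 : rat)
  (ht : 0 < t0 < len e0).

Let ax := gax_of hr.
Let iK : forall e : gE H, inv (inv e) = e. Proof. by case: ax. Qed.
Let ine : forall e : gE H, inv e != e. Proof. by case: ax. Qed.
Let lp : forall e : gE H, 0 < len e. Proof. by case: ax. Qed.
Let li : forall e : gE H, len (inv e) = len e. Proof. by case: ax. Qed.
Let ht1 : 0 < t0. Proof. by case/andP: ht. Qed.
Let ht2 : t0 < len e0. Proof. by case/andP: ht. Qed.

Let oldP (e : oldE e0) : (inv (val e) != e0) && (inv (val e) != inv e0).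
Proof.
have /andP [h1 h2] := valP e.
apply/andP; split; apply/eqP => h.
  by move/eqP: h2; apply; rewrite -[val e]iK h.
by move/eqP: h1; apply; rewrite -[val e]iK h iK.
Qed.

Let sEinv_inl (e : oldE e0) :
  sE_inv (inl e) = inl (Sub (inv (val e)) (oldP e) : oldE e0).
Proof. by rewrite /sE_inv (@insubT _ _ (oldE e0) _ (oldP e)). Qed.

Let sEinv_inr o h : sE_inv (inr (o, h) : (oldE e0 + (bool * bool))%type) = inr (~~ o, ~~ h).
Proof. by []. Qed.

Arguments sE_inv : simpl never.

Lemma subE_rmg : is_rmg (subdivE e0 t0).
Proof.
have iK' : forall s : gE (subdivE e0 t0), inv (inv s) = s.
  case=> [e|[o h]] /=.
    rewrite sEinv_inl sEinv_inl; congr inl; apply: val_inj => /=.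
    by rewrite ?SubK iK.
  by rewrite /sE_inv /= !negbK.
split => //.
- case=> [e|[[] []]] //=.
  rewrite sEinv_inl; apply/negP => /eqP [] /(congr1 val) /=.
  by rewrite ?SubK => /eqP; rewrite (negbTE (ine _)).
- by case=> [e|[[] []]] //=; rewrite subr_gt0.
- by case=> [e|[[] []]] //=; rewrite sEinv_inl /= ?SubK li.
- have a0 : forall v, connect (@adjacent (subdivE e0 t0)) (Some (src e0)) (Some v).
    move=> v.
    case: hr => _ _ _ _ conn.
    apply: (@lift_conn H (subdivE e0 t0) iK iK' Some) (conn _ _) => x y /existsP [e /andP [/eqP <- /eqP <-]].
    case: (eqVneq e e0) => [->|n1].
      apply: (@connect_trans _ _ None); apply: connect1.
        by apply: (@adj_intro (subdivE e0 t0) (inr (true, true))).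
      by apply: (@adj_intro (subdivE e0 t0) (inr (true, false))).
    case: (eqVneq e (inv e0)) => [->|n2].
      apply: (@connect_trans _ _ None); apply: connect1.
        by apply: (@adj_intro (subdivE e0 t0) (inr (false, true))).
      by apply: (@adj_intro (subdivE e0 t0) (inr (false, false))) => //=; rewrite /tgt iK.
    have Pe : (e != e0) && (e != inv e0) by rewrite n1 n2.
    apply: connect1; apply: (@adj_intro (subdivE e0 t0) (inl (Sub e Pe : oldE e0))) => //.
    by rewrite /tgt /= sEinv_inl /= ?SubK.
  apply: (conn_from iK' (r := Some (src e0))); case=> [v|] //.
  apply: connect1; by apply: (@adj_intro (subdivE e0 t0) (inr (true, true))).
Qed.

Lemma subE_valid y : valid_pt y -> valid_pt (embE e0 t0 y).
Proof.
case: y => [v|e t|d t] //= hv.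
case: (eqVneq e e0) => [E|n1].
  subst e; move: hv => /andP [a b].
  by case: ltgtP => h //=; apply/andP; split; lra.
case: (eqVneq e (inv e0)) => [E|n2].
  subst e; rewrite li in hv; move: hv => /andP[a b].
  by case: ltgtP => h //=; apply/andP; split; lra.
have Pe : (e != e0) && (e != inv e0) by rewrite n1 n2.
by rewrite (@insubT _ _ (oldE e0) _ Pe) /=.
Qed.

Section WithSol.
Variables (m : meas H) (a : gV H -> rat) (P : gE H -> {poly rat})
  (Q : gD H -> {poly rat}) (hs : Sol m a P Q).

Let c := (P e0).[t0].
Let a' (w : option (gV H)) : rat := if w is Some v then a v else c.
Let P' (s : (oldE e0 + (bool * bool))%type) : {poly rat} :=
  match s with
  | inl e => P (val e)
  | inr (o, h) =>
      if o then (if h then P e0 else P e0 \Po ('X + t0%:P))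
      else (if h then P (inv e0) else P (inv e0) \Po ('X + (len e0 - t0)%:P))
  end.

Let PI : forall e, P (inv e) = P e \Po ((len e)%:P - 'X). Proof. by case: hs. Qed.
Let Pa : forall e, (P e).[0] = a (src e). Proof. by case: hs. Qed.

Lemma subE_emb y : valid_pt y -> @mkF (subdivE e0 t0) a' P' Q (embE e0 t0 y) = mkF a P Q y.
Proof.
case: y => [v|e t|d t] //= hv.
case: (eqVneq e e0) => [E|n1].
  subst e; case: (ltgtP t t0) => h //=.
    by rewrite horner_comp !hornerE; congr (_.[_]); simpl; ring.
  by rewrite /c h.
case: (eqVneq e (inv e0)) => [E|n2].
  subst e; case: (ltgtP t (len e0 - t0)) => h //=.
    by rewrite horner_comp !hornerE; congr (_.[_]); simpl; ring.
  by rewrite /c h PI horner_comp !hornerE; congr (_.[_]); simpl; ring.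
have Pe : (e != e0) && (e != inv e0) by rewrite n1 n2.
by rewrite (@insubT _ _ (oldE e0) _ Pe) /=.
Qed.

Lemma subE_sol : @Sol (subdivE e0 t0) (pullE e0 t0 m) a' P' Q.
Proof.
case: hs => _ _ Qa Qs [l1 l2 l3].
split => //.
- case=> [e|[[] []]] /=.
  + by rewrite sEinv_inl /= ?SubK PI.
  + by apply: poly_ext => x; rewrite PI !horner_comp !hornerE; congr (_.[_]); simpl; ring.
  + by apply: poly_ext => x; rewrite PI !horner_comp !hornerE; congr (_.[_]); simpl; ring.
  + by apply: poly_ext => x; rewrite PI !horner_comp !hornerE; congr (_.[_]); simpl; ring.
  + by apply: poly_ext => x; rewrite PI !horner_comp !hornerE; congr (_.[_]); simpl; ring.
- case=> [e|[[] []]] //=.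
  + by rewrite horner_comp !hornerE /c; congr (_.[_]); simpl; ring.
  + by rewrite horner_comp PI horner_comp !hornerE /c; congr (_.[_]); simpl; ring.
split.
- case=> [e|[[] []]] //=.
  + by rewrite !deriv_shift -derivn2 l1 comp_polyNl.
  + by rewrite !deriv_shift -derivn2 l1 comp_polyNl.
- case=> [v|] /=.
  + rewrite l2; congr (- (_ + _)).
      rewrite big_sumType /=.
      rewrite (sum_sub (fun e => (e != e0) && (e != inv e0)) (fun e => Some (src e) == Some v) (fun e => (P e)^`().[0])).
      rewrite [X in _ + X]big_mkcond sum_bb /= big_mkcondr /=.
      have ne0 : e0 != inv e0 by rewrite eq_sym ine.
      rewrite big_mkcond (sum_split2 _ ne0) /= !(inj_eq (@Some_inj _)).
      simpl; ring.
  + rewrite [X in _ + X]big_pred0 // addr0 big_sumType /= big_pred0 // add0r.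
    rewrite big_mkcond sum_bb /=.
    rewrite !deriv_shift PI deriv_refl !horner_comp !hornerE horner_comp !hornerE.
    rewrite (_ : len e0 - (len e0 - t0) = t0); first by rewrite subrr oppr0.
    simpl; ring.
- by [].
Qed.

End WithSol.
End SubE.

Section SubD.
Variables (H : rmgraph) (hr : is_rmg H) (d0 : gD H) (t0 : rat) (ht : 0 < t0).

Let ax := gax_of hr.
Let iK : forall e : gE H, inv (inv e) = e. Proof. by case: ax. Qed.
Let ine : forall e : gE H, inv e != e. Proof. by case: ax. Qed.
Let lp : forall e : gE H, 0 < len e. Proof. by case: ax. Qed.
Let li : forall e : gE H, len (inv e) = len e. Proof. by case: ax. Qed.

Lemma subD_rmg : is_rmg (subdivD d0 t0).
Proof.
have iK' : forall s : gE (subdivD d0 t0), inv (inv s) = s.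
  by case=> [e|b] /=; rewrite ?iK ?negbK.
split => //.
- case=> [e|[]] //=.
  by apply/negP => /eqP [] /eqP; rewrite (negbTE (ine _)).
- by case=> [e|b] //=.
- by case=> [e|b] //=.
- case: hr => _ _ _ _ conn.
  apply: (conn_from iK' (r := Some (srcD d0))); case=> [v|].
    apply: (@lift_conn H (subdivD d0 t0) iK iK' Some) (conn _ _) => x y /existsP [e /andP [/eqP <- /eqP <-]].
    by apply: connect1; apply: (@adj_intro (subdivD d0 t0) (inl e)).
  by apply: connect1; apply: (@adj_intro (subdivD d0 t0) (inr true)).
Qed.

Lemma subD_valid y : valid_pt y -> valid_pt (embD d0 t0 y).
Proof.
case: y => [v|e t|d t] //= hv.
case: (eqVneq d d0) => [E|n1] //.
subst d; case: ltgtP => h //=; first by rewrite h hv.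
by rewrite subr_gt0.
Qed.

Section WithSol.
Variables (m : meas H) (a : gV H -> rat) (P : gE H -> {poly rat})
  (Q : gD H -> {poly rat}) (hs : Sol m a P Q).

Let c := (Q d0).[t0].
Let a' (w : option (gV H)) : rat := if w is Some v then a v else c.
Let P' (s : (gE H + bool)%type) : {poly rat} :=
  match s with
  | inl e => P e
  | inr b => if b then Q d0 else Q d0 \Po (t0%:P - 'X)
  end.
Let Q' (d : gD H) : {poly rat} := if d == d0 then Q d0 \Po ('X + t0%:P) else Q d.

Lemma subD_emb y : valid_pt y -> @mkF (subdivD d0 t0) a' P' Q' (embD d0 t0 y) = mkF a P Q y.
Proof.
case: y => [v|e t|d t] //= hv.
case: (eqVneq d d0) => [E|n1]; last by rewrite /= /Q' (negbTE n1).
subst d; case: ltgtP => h //=.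
  by rewrite /Q' eqxx horner_comp !hornerE; congr (_.[_]); simpl; ring.
by rewrite /c h.
Qed.

Lemma subD_sol : @Sol (subdivD d0 t0) (pullD d0 t0 m) a' P' Q'.
Proof.
case: hs => PI Pa Qa Qs [l1 l2 l3].
have [Q2 Q1] := small_deriv (Qs d0).
split => //.
- case=> [e|[]] //=.
  by apply: poly_ext => x; rewrite !horner_comp !hornerE; congr (_.[_]); simpl; ring.
- case=> [e|[]] //=.
  by rewrite horner_comp !hornerE /c; congr (_.[_]); simpl; ring.
- move=> d /=; rewrite /Q'; case: (eqVneq d d0) => [E|n1] //.
  by subst d; rewrite horner_comp !hornerE /c; congr (_.[_]); simpl; ring.
- move=> d; rewrite /Q'; case: (d == d0) => //.
  by rewrite size_comp_poly2 ?size_XaddC.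
split.
- case=> [e|[]] /=; first exact: l1.
    by rewrite -derivn2 Q2 oppr0.
  by rewrite -derivn2 deriv2_refl Q2 comp_poly0 oppr0.
- case=> [v|] /=.
  + rewrite l2; congr (- _).
    rewrite big_sumType /= [X in _ + X + _]big_mkcond big_bool /=.
    rewrite !(inj_eq (@Some_inj _)).
    have E1 : \sum_(d | srcD d == v) (Q d)^`().[0] =
       (if srcD d0 == v then (Q d0)^`().[0] else 0) +
       \sum_(d | d != d0) (if srcD d == v then (Q d)^`().[0] else 0).
      by rewrite big_mkcond (bigD1 d0).
    have E2 : \sum_(d | (if d == d0 then None else Some (srcD d)) == Some v) (Q' d)^`().[0]
       = \sum_(d | d != d0) (if srcD d == v then (Q d)^`().[0] else 0).
      rewrite big_mkcond (bigD1 d0) //= eqxx /= add0r; apply: eq_bigr => i ni.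
      by rewrite /Q' (negbTE ni) (inj_eq (@Some_inj _)).
    have E3 : \sum_(e | src e == v) (P e)^`().[0] = \sum_(e | Some (src e) == Some v) (P e)^`().[0].
      by apply: eq_bigl => e; rewrite (inj_eq (@Some_inj _)).
    by rewrite E1 E2 E3 addr0 addrA.
  + rewrite big_sumType /= big_pred0 // add0r big_mkcond big_bool /=.
    rewrite (big_pred1 d0); last first.
      by move=> d; rewrite /= /pred1; case: (d == d0).
    rewrite /Q' eqxx deriv_shift deriv_refl !horner_comp !hornerE.
    by rewrite horner_comp !hornerE addNr oppr0.
- move=> d /=; rewrite /Q'; case: (eqVneq d d0) => [E|n1] //.
  by subst d; rewrite deriv_shift horner_comp !hornerE Q1 l3.
Qed.

End WithSol.
End SubD.

Lemma sub_gen (H : rmgraph) (hr : is_rmg H) (p : pt H) (hp : valid_pt p)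
  (m : meas H) a P Q (hs : Sol m a P Q) :
  [/\ is_rmg (subdiv p), (forall y, valid_pt y -> valid_pt (emb p y)) &
   exists a' P' Q', [/\ @Sol (subdiv p) (pull p m) a' P' Q',
     (forall y, valid_pt y -> mkF a' P' Q' (emb p y) = mkF a P Q y),
     (forall v, a' (vemb p v) = a v) & a' (newv p) = mkF a P Q p]].
Proof.
case: p hp => [v|e t|d t] /= hp.
- by split => //; exists a, P, Q; split.
- split; [exact: subE_rmg | exact: subE_valid |].
  eexists _, _, _; split; [exact: (subE_sol hr e t hs) | exact: (subE_emb e t hs) | by [] | by []].
- split; [exact: subD_rmg | exact: subD_valid |].
  eexists _, _, _; split; [exact: (subD_sol d t hs) | exact: (subD_emb d t a P Q) | by [] | by []].
Qed.

Lemma prim_zero l : (prim 0).[l] = 0.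
Proof. rewrite (@prim_ftc _ 0); last exact: deriv0. by rewrite !horner0 subr0. Qed.

Lemma integ_delta2 (H : rmgraph) (F : pt H -> rat) P u w :
  integ F P (delta2 u w) = F (PV u) - F (PV w).
Proof.
rewrite /integ /delta2 /=.
rewrite big1; last by move=> e _; rewrite mulr0 prim_zero.
rewrite [X in _ + X]big1; last by move=> d _; rewrite mul0r.
rewrite add0r addr0.
under eq_bigr do rewrite mulrBl.
rewrite sumrB (bigD1 u) //= eqxx mul1r big1 ?addr0; last first.
  by move=> v /negbTE ->; rewrite mul0r.
rewrite (bigD1 w) //= eqxx mul1r big1 ?addr0 //.
by move=> v /negbTE ->; rewrite mul0r.
Qed.

Lemma delta2_M0 (H : rmgraph) (u w : gV H) : in_M0 (delta2 u w).
Proof.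
split.
  by move=> e; rewrite /delta2 /= comp_poly0.
rewrite /total_mass /delta2 /=.
rewrite big1; last by move=> e _; rewrite prim_zero.
rewrite [X in _ + X]big1 // addr0 add0r sumrB.
rewrite (bigD1 u) //= eqxx big1 ?addr0; last by move=> v /negbTE ->.
rewrite (bigD1 w) //= eqxx big1 ?addr0 ?subrr //.
by move=> v /negbTE ->.
Qed.

Theorem lemma7p10 (G : rmgraph) (mu : meas G) (b : pt G) :
  is_rmg G -> in_M0 mu -> valid_pt b ->
  in_Omega_log (hp_fun mu b) /\ laplacian_eq (hp_fun mu b) mu.
Proof.
move=> hr hm hb.
have ax := gax_of hr.
have [a [P [Q hs]]] := exists_sol hr hm.
pose g := mkF a P Q.
have key : forall x, valid_pt x -> hp_fun mu b x = g x - g b.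
  move=> x hx.
  have [hr1 hv1 [a1 [P1 [Q1 [hs1 he1 hve1 hn1]]]]] := sub_gen hr hx hs.
  have hb1 := hv1 b hb.
  have [hr2 _ [a2 [P2 [Q2 [hs2 he2 hve2 hn2]]]]] := sub_gen hr1 hb1 hs1.
  rewrite /hp_fun /pairing.
  set u := vemb (emb x b) (newv x).
  set w := newv (emb x b).
  set m2 := pull (emb x b) (pull x mu).
  have [ad [Pd [Qd hsd]]] := exists_sol hr2 (delta2_M0 u w).
  have ex : exists c, exists F P Q, repr F P Q /\ lap_is P Q (delta2 u w) /\ c = integ F P m2.
    exists (integ (mkF ad Pd Qd) Pd m2), (mkF ad Pd Qd), Pd, Qd.
    split; first exact: repr_mkF hsd.
    by split => //; case: hsd.
  have [F [P0 [Q0 [rF [lF ->]]]]] := epsilon_spec (inhabits (0:rat)) _ ex.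
  have ax2 := gax_of hr2.
  have l2 : lap_is P2 Q2 m2 by case: hs2.
  rewrite (green ax2 rF (repr_mkF hs2) l2).
  transitivity (integ (mkF a2 P2 Q2) P2 (delta2 u w)).
    by rewrite (green ax2 (repr_mkF hs2) rF lF); apply: eq_bigr => e _; rewrite mulrC.
  rewrite integ_delta2 /= /u /w hve2 hn1 hn2 he1 //.
have [r1 r2 r3 r4 r5] := repr_mkF hs.
have iK := let: And4 x _ _ _ := ax in x.
have li := let: And4 _ _ _ x := ax in x.
pose P' e := P e - (g b)%:P.
pose Q' d := Q d - (g b)%:P.
have rep : repr (hp_fun mu b) P' Q'.
  split.
  - move=> e t ht.
    have ht' : 0 < len e - t < len (inv e).
      by rewrite li; move: ht => /andP [x y]; apply/andP; split; lra.
    by rewrite !key // /g r1.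
  - by move=> e t ht; rewrite key // /g /P' !hornerE.
  - by move=> e; rewrite key // /g /P' !hornerE /=; case: hs => _ -> _ _ _.
  - move=> d; rewrite /Q' -polyCN.
    apply: leq_trans (size_polyD _ _) _; rewrite geq_max r4.
    exact: leq_trans (size_polyC_leq1 _) _.
  - move=> d; split.
      by rewrite key // /g /Q' !hornerE /=; case: hs => _ _ -> _ _.
    by move=> t ht; rewrite key // /g /Q' !hornerE.
split; first by exists P', Q'.
exists P', Q'; split => //.
case: hs => _ _ _ _ [l1 l2 l3].
have dP : forall e, (P' e)^`() = (P e)^`() by move=> e; rewrite /P' derivB derivC subr0.
have dQ : forall d, (Q' d)^`() = (Q d)^`() by move=> d; rewrite /Q' derivB derivC subr0.
split.
- by move=> e; rewrite derivn2 dP -derivn2 l1.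
- move=> v; rewrite l2; congr (- (_ + _)); apply: eq_bigr => ? _; by rewrite ?dP ?dQ.
- by move=> d; rewrite dQ l3.
Qed.
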